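(* Let $1\le k<d$, $\mu>0$, $u\in\mathbb{R}^d$ with $u_1\ge\cdots\ge u_d\ge0$, $\bar u_i=u_i/(1+\mu)$ for $i\in[k]$, and let $\tilde x=\mathrm{argmin}_{x\in\mathbb{R}^d}\{\mu\|x\|_{k,2}^2+\|x-u\|^2\}$. Then there exist indices $j_s\in\{1,\dots,k\}$, $j_e\in\{k,\dots,d\}$ and a number $\xi$ with $u_{j_e+1}\le\xi\le\bar u_{j_s-1}$ (with the conventions $\bar u_0=+\infty$, $u_{d+1}=0$) such that $$\tilde x=(\bar u_1,\dots,\bar u_{j_s-1},\underbrace{\xi,\dots,\xi}_{\text{positions } j_s,\dots,j_e},u_{j_e+1},\dots,u_d)^\top .$$ Moreover, for arbitrary $v\in\mathbb{R}^d$, if $u=\sigma(|v|)$ where $|v|=(|v_1|,\dots,|v_d|)$ and $\sigma$ is a permutation of coordinates sorting $|v|$ in non-increasing order, then $\mathrm{prox}_{\frac{\mu}{2}\|\cdot\|_{k,2}^2}(v)=\mathrm{sign}(v)\odot\sigma^{-1}(\tilde x)$.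
   Context: $\|\cdot\|$ is the Euclidean norm. For $z\in\mathbb{R}^m$ and integer $j\ge0$, $\|z\|_{j,2}$ is the Euclidean norm of the vector obtained from $z$ by keeping (up to) $j$ entries of largest absolute value and setting the others to $0$. For convex $g$, $\mathrm{prox}_g(x)=\mathrm{argmin}_y\{g(y)+\frac12\|x-y\|^2\}$. $\mathrm{sign}(v)\in\{-1,1\}^d$ has $i$th entry $1$ if $v_i\ge0$ and $-1$ otherwise; $\odot$ is the entrywise product; $\sigma$ and $\sigma^{-1}$ act on vectors by permuting coordinates, with $\sigma^{-1}(\sigma(x))=x$. *)

(* Defs.v *)
From HB Require Import structures.
From mathcomp Require Import all_boot all_order all_algebra all_fingroup.
Set Implicit Arguments. Unset Strict Implicit. Unset Printing Implicit Defensive.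
Import Order.TTheory GRing.Theory Num.Theory.
Local Open Scope ring_scope.

Section Defs.
Variables (R : rcfType) (d : nat).

Definition norm2 (x : 'I_d -> R) : R := Num.sqrt (\sum_(i < d) x i ^+ 2).

Definition topk_norm (j : nat) (z : 'I_d -> R) : R :=
  Num.sqrt (\sum_(a <- take j (sort (fun a b : R => b <= a)
                                   [seq `|z i| | i <- enum 'I_d])) a ^+ 2).

Definition is_argmin (F : ('I_d -> R) -> R) (x : 'I_d -> R) : Prop :=
  forall y, F x <= F y.

Definition obj (k : nat) (mu : R) (u x : 'I_d -> R) : R :=
  mu * topk_norm k x ^+ 2 + norm2 (fun i => x i - u i) ^+ 2.

Definition prox_obj (k : nat) (mu : R) (v y : 'I_d -> R) : R :=
  mu / 2 * topk_norm k y ^+ 2 + 1 / 2 * norm2 (fun i => v i - y i) ^+ 2.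

(* 1-based coordinate access, with u_p = 0 outside 1..d (so u_{d+1} = 0) *)
Definition coord1 (u : 'I_d -> R) (p : nat) : R :=
  odflt 0 (omap u (insub p.-1 : option 'I_d)).

Definition sgnv (v : 'I_d -> R) : 'I_d -> R :=
  fun i => if 0 <= v i then 1 else -1.

Definition permv (s : {perm 'I_d}) (x : 'I_d -> R) : 'I_d -> R :=
  fun i => x (s i).

End Defs.

(* Main.v *)
Require Import Defs.
From HB Require Import structures.
From mathcomp Require Import all_boot all_order all_algebra all_fingroup.
From mathcomp Require Import ring lra zify.
From Stdlib Require Import FunctionalExtensionality.
Import Order.TTheory GRing.Theory Num.Theory.
Local Open Scope ring_scope.
Set Implicit Arguments. Unset Strict Implicit. Unset Printing Implicit Defensive.

Section Topk.
Context {R : rcfType}.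

Lemma sum1_seq (I : Type) (s : seq I) : \sum_(i <- s) (1 : R) = (size s)%:R.
Proof. elim: s => [|x s IH]; first by rewrite big_nil. by rewrite big_cons IH /= -nat1r. Qed.

Lemma ler_sum_in (I : eqType) (s : seq I) (F G : I -> R) :
  (forall i, i \in s -> F i <= G i) -> \sum_(i <- s) F i <= \sum_(i <- s) G i.
Proof. by move=> h; rewrite big_seq [X in _ <= X]big_seq; apply: ler_sum. Qed.

Lemma topk_lower (I : eqType) (S : seq I) (b w : I -> R) (k : nat) :
  sorted (fun i j => b j <= b i) S -> (k < size S)%N ->
  (forall i, 0 <= w i <= 1) -> \sum_(i <- S) w i = k%:R ->
  \sum_(i <- S) w i * b i <= \sum_(i <- take k S) b i.
Proof.
move=> srt ltk w01 sw.
have tr : transitive (fun i j => b j <= b i).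
  by move=> x y z /= h1 h2; apply: le_trans h2 h1.
rewrite sorted_pairwise // -(cat_take_drop k S) pairwise_cat in srt.
case/and3P: srt => ar _ pd.
have : (0 < size (drop k S))%N by rewrite size_drop subn_gt0.
case ed: (drop k S) => [|j0 rest] //= _.
rewrite ed in ar pd; move: pd => /= /andP[allr _].
have H1 : forall i, i \in take k S -> b j0 <= b i.
  by move=> i iS; move/allrelP: ar => /(_ i j0 iS); apply; rewrite inE eqxx.
have H2 : forall j, j \in j0 :: rest -> b j <= b j0.
  move=> j; rewrite inE => /orP[/eqP->//|jr]; by move/allP: allr => /(_ j jr).
set t := b j0.
have E : \sum_(i <- S) w i = \sum_(i <- take k S) w i + \sum_(i <- j0 :: rest) w i.
  by rewrite -big_cat -ed cat_take_drop.
have E2 : \sum_(i <- S) w i * b i = \sum_(i <- take k S) w i * b i + \sum_(i <- j0 :: rest) w i * b i.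
  by rewrite -big_cat -ed cat_take_drop.
rewrite E2.
have L1 : \sum_(i <- take k S) (w i * b i + (1 - w i) * t) <= \sum_(i <- take k S) b i.
  apply: ler_sum_in => i iS; case/andP: (w01 i) => ha hb; have h := H1 i iS.
  have h1 : 0 <= 1 - w i by rewrite subr_ge0.
  have h2 : 0 <= b i - t by rewrite subr_ge0.
  have := mulr_ge0 h1 h2; lra.
have L2 : \sum_(i <- j0 :: rest) w i * b i <= \sum_(i <- j0 :: rest) w i * t.
  apply: ler_sum_in => i iS; case/andP: (w01 i) => ha hb; have h := H2 i iS.
  have h2 : 0 <= t - b i by rewrite subr_ge0.
  have := mulr_ge0 ha h2; lra.
have L3 : \sum_(i <- take k S) (w i * b i + (1 - w i) * t) =
   \sum_(i <- take k S) w i * b i + (k%:R - \sum_(i <- take k S) w i) * t.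
  rewrite big_split /= -mulr_suml sumrB sum1_seq size_take ltk //.
rewrite -mulr_suml in L2.
have : (k%:R - \sum_(i <- take k S) w i) * t = (\sum_(i <- j0 :: rest) w i) * t.
  by rewrite sw in E; rewrite E; congr (_ * _); ring.
lra.
Qed.

Lemma topk_upper (I : eqType) (S : seq I) (b w : I -> R) (k : nat) (tau : R) :
  (k <= size S)%N ->
  (forall i, tau < b i -> w i = 1) -> 
  (forall i, b i < tau -> w i = 0) -> \sum_(i <- S) w i = k%:R ->
  \sum_(i <- take k S) b i <= \sum_(i <- S) w i * b i.
Proof.
move=> lek h1 h0 sw.
pose m i := if tau < b i then b i - tau else 0.
have E1 : forall i, w i * b i = w i * tau + m i.
  move=> i; rewrite /m; case: ltP => hb; first by rewrite h1 //; ring.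
  case: (ltgtP (b i) tau) hb => // [hlt|->] _; last by rewrite addr0.
  by rewrite h0 // !mul0r addr0.
have m0 : forall i, 0 <= m i by move=> i; rewrite /m; case: ltP => // h; rewrite subr_ge0 ltW.
have bm : forall i, b i <= tau + m i.
  by move=> i; rewrite /m; case: ltP => h; [rewrite addrC subrK | rewrite addr0].
rewrite (eq_bigr _ (fun i _ => E1 i)) big_split /= -mulr_suml sw.
apply: (le_trans (ler_sum _ (fun i _ => bm i))).
rewrite big_split /=.
have -> : \sum_(i <- take k S) tau = k%:R * tau.
  by rewrite -[in LHS](mul1r tau) -mulr_suml sum1_seq size_takel.
rewrite lerD2l.
rewrite -{2}(cat_take_drop k S) big_cat /= lerDl.
by apply: sumr_ge0 => i _.
Qed.

Definition sortI d (z : 'I_d -> R) :=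
  sort (relpre (fun i => `|z i|) (fun a b : R => b <= a)) (enum 'I_d).

Lemma topkE d k (z : 'I_d -> R) :
  topk_norm k z ^+ 2 = \sum_(i <- take k (sortI z)) z i ^+ 2.
Proof.
rewrite /topk_norm sqr_sqrtr; last by apply: sumr_ge0 => i _; apply: sqr_ge0.
rewrite sort_map -map_take big_map; apply: eq_bigr => i _.
by rewrite real_normK // num_real.
Qed.

Lemma sortI_sorted d (z : 'I_d -> R) :
  sorted (fun i j => z j ^+ 2 <= z i ^+ 2) (sortI z).
Proof.
apply: (@sub_sorted _ (relpre (fun i => `|z i|) (fun a b : R => b <= a))).
  move=> i j /= h; rewrite -(real_normK (num_real (z i))) -(real_normK (num_real (z j))).
  have := normr_ge0 (z j); nra.
apply: sort_sorted => i j /=; exact: le_total.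
Qed.

Lemma sortI_sum d (z : 'I_d -> R) (F : 'I_d -> R) :
  \sum_(i <- sortI z) F i = \sum_(i < d) F i.
Proof. by rewrite (perm_big (enum 'I_d)) ?big_enum // perm_sort perm_refl. Qed.

Lemma sortI_size d (z : 'I_d -> R) : size (sortI z) = d.
Proof. by rewrite size_sort size_enum_ord. Qed.

Lemma T_lower d k (z w : 'I_d -> R) : (k < d)%N ->
  (forall i, 0 <= w i <= 1) -> \sum_(i < d) w i = k%:R ->
  \sum_(i < d) w i * z i ^+ 2 <= topk_norm k z ^+ 2.
Proof.
move=> kd w01 sw; rewrite topkE -(sortI_sum z).
apply: topk_lower => //; [exact: sortI_sorted | by rewrite sortI_size | by rewrite (sortI_sum z)].
Qed.

Lemma T_upper d k (z w : 'I_d -> R) tau : (k <= d)%N ->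
  (forall i, tau < z i ^+ 2 -> w i = 1) -> (forall i, z i ^+ 2 < tau -> w i = 0) ->
  \sum_(i < d) w i = k%:R ->
  topk_norm k z ^+ 2 <= \sum_(i < d) w i * z i ^+ 2.
Proof.
move=> kd h1 h0 sw; rewrite topkE -(sortI_sum z).
apply: (topk_upper (tau := tau)) => //; [by rewrite sortI_size | by rewrite (sortI_sum z)].
Qed.

Lemma T_perm d k (z z' : 'I_d -> R) :
  perm_eq [seq `|z i| | i <- enum 'I_d] [seq `|z' i| | i <- enum 'I_d] ->
  topk_norm k z = topk_norm k z'.
Proof.
move=> h; rewrite /topk_norm; congr (Num.sqrt (\sum_(a <- take k _) _)).
apply/perm_sortP => //.
- by move=> a b; exact: le_total.
- by move=> a b c h1 h2; exact: le_trans h2 h1.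
- by move=> a b /andP[h1 h2]; apply: le_anti; rewrite h1 h2.
Qed.

End Topk.

Section Cert.
Context {R : rcfType}.

Lemma norm2_sq d (f : 'I_d -> R) : norm2 f ^+ 2 = \sum_(i < d) f i ^+ 2.
Proof. by rewrite /norm2 sqr_sqrtr //; apply: sumr_ge0 => i _; apply: sqr_ge0. Qed.

Lemma cert_ineq d k (mu : R) (u x w : 'I_d -> R) tau :
  (k < d)%N -> 0 < mu -> (forall i, 0 <= w i <= 1) -> \sum_(i < d) w i = k%:R ->
  (forall i, tau < x i ^+ 2 -> w i = 1) -> (forall i, x i ^+ 2 < tau -> w i = 0) ->
  (forall i, u i = (1 + mu * w i) * x i) ->
  forall y, obj k mu u x + \sum_(i < d) (y i - x i) ^+ 2 <= obj k mu u y.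
Proof.
move=> kd mu0 w01 sw h1 h0 ue y; rewrite /obj !norm2_sq.
have Ly := T_lower y kd w01 sw.
have Ux := T_upper (ltnW kd) h1 h0 sw.
have Ly' := ler_wpM2l (ltW mu0) Ly.
have Ux' := ler_wpM2l (ltW mu0) Ux.
have key : mu * (\sum_(i < d) w i * x i ^+ 2) + \sum_(i < d) (x i - u i) ^+ 2 +
   \sum_(i < d) (y i - x i) ^+ 2 <= mu * (\sum_(i < d) w i * y i ^+ 2) + \sum_(i < d) (y i - u i) ^+ 2.
  rewrite !mulr_sumr -!big_split /=; apply: ler_sum => i _.
  rewrite ue; case/andP: (w01 i) => ha hb.
  have := mulr_ge0 (mulr_ge0 (ltW mu0) ha) (sqr_ge0 (y i - x i)).
  set a := w i; set b := x i; set c := y i. 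
  have -> : mu * (a * c ^+ 2) + (c - (1 + mu * a) * b) ^+ 2 =
     mu * (a * b ^+ 2) + (b - (1 + mu * a) * b) ^+ 2 + (c - b) ^+ 2 + mu * a * (c - b) ^+ 2 by ring.
  lra.
lra.
Qed.
End Cert.

Section IVT.
Context {R : rcfType}.

Definition affine_on (f : R -> R) (x y : R) :=
  forall l, 0 <= l <= 1 -> f (x + l * (y - x)) = f x + l * (f y - f x).

Lemma affine_root (f : R -> R) a b : a <= b -> 0 <= f a -> f b <= 0 ->
  affine_on f a b -> exists c, a <= c <= b /\ f c = 0.
Proof.
move=> ab fa fb haff.
case: (eqVneq (f a - f b) 0) => h.
  by exists a; rewrite lexx ab; lra.
have hp : 0 < f a - f b by rewrite lt_def h /=; lra.
set l := f a / (f a - f b).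
have l0 : 0 <= l by rewrite /l divr_ge0 // ltW.
have l1 : l <= 1 by rewrite /l ler_pdivrMr // mul1r; lra.
exists (a + l * (b - a)); split.
  apply/andP; split; first by rewrite lerDl mulr_ge0 // subr_ge0.
  have : l * (b - a) <= 1 * (b - a) by apply: ler_wpM2r => //; rewrite subr_ge0.
  lra.
rewrite haff ?l0 ?l1 // /l.
have -> : f b - f a = - (f a - f b) by ring.
by rewrite mulrN mulfVK // subrr.
Qed.

Lemma pl_ivt (f : R -> R) (n : nat) : forall (Q : seq R) a b, (size Q <= n)%N ->
  a <= b -> 0 <= f a -> f b <= 0 ->
  (forall x y, a <= x -> x <= y -> y <= b ->
      (forall q, q \in Q -> ~~ ((x < q) && (q < y))) -> affine_on f x y) ->
  exists c, a <= c <= b /\ f c = 0.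
Proof.
elim: n => [|n IH] Q a b szQ ab fa fb haff.
- apply: affine_root => //; apply: haff => // q; move: szQ; rewrite leqn0 => /nilP ->.
  by rewrite in_nil.
- case hq: (has (fun q => (a < q) && (q < b)) Q).
  + case/hasP: hq => q qQ /andP[aq qb].
    have szr : (size (rem q Q) <= n)%N by rewrite size_rem //; case: (Q) szQ => //.
    have memQ : forall q', q' \in Q -> q' = q \/ q' \in rem q Q.
      move=> q' q'Q; case: (eqVneq q' q) => [->|ne]; [by left | right; exact: rem_mem].
    case: (lerP 0 (f q)) => fq.
    * have [c [/andP[h1 h2] h3]] : exists c, q <= c <= b /\ f c = 0.
        apply: (IH (rem q Q)) => //; first exact: ltW.
        move=> x y qx xy yb hnone; apply: haff => //; first exact: le_trans (ltW aq) qx.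
        move=> q' /memQ [->|]; first by rewrite negb_and -leNgt qx.
        exact: hnone.
      by exists c; rewrite h3 (le_trans (ltW aq) h1) h2.
    * have [c [/andP[h1 h2] h3]] : exists c, a <= c <= q /\ f c = 0.
        apply: (IH (rem q Q)) => //; [exact: ltW | exact: ltW |].
        move=> x y ax xy yq hnone; apply: haff => //; first exact: le_trans yq (ltW qb).
        move=> q' /memQ [->|]; first by rewrite negb_and -!leNgt yq orbT.
        exact: hnone.
      by exists c; rewrite h3 h1 (le_trans h2 (ltW qb)).
  + apply: affine_root => //; apply: haff => // q qQ.
    by apply/negP => hh; move/hasP: hq; apply; exists q.
Qed.
End IVT.

Lemma prefix_nat (P : nat -> bool) n :
  (forall i j, (i <= j)%N -> (j < n)%N -> P j -> P i) ->
  exists a, (a <= n)%N /\ forall i, (i < n)%N -> P i = (i < a)%N.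
Proof.
elim: n => [|n IH] h; first by exists 0%N.
have [a [an ha]] : exists a, (a <= n)%N /\ forall i, (i < n)%N -> P i = (i < a)%N.
  by apply: IH => i j ij jn; apply: h => //; apply: ltnW.
case Pn: (P n).
- exists n.+1; split => // i hi.
  have : (i == n) || (i < n)%N by rewrite -leq_eqVlt -ltnS.
  case/orP => [/eqP->|lt]; first by rewrite Pn ltnS leqnn.
  by rewrite (h i n) // ?ltnW // ltnS ltnW.
- exists a; split; first exact: leqW.
  move=> i hi; have : (i == n) || (i < n)%N by rewrite -leq_eqVlt -ltnS.
  case/orP => [/eqP->|lt]; last exact: ha.
  by rewrite Pn; apply/esym/negbTE; rewrite -leqNgt.
Qed.

Lemma prefix_ord d (P : 'I_d -> bool) :
  (forall i j : 'I_d, (i <= j)%N -> P j -> P i) ->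
  exists a, (a <= d)%N /\ forall i : 'I_d, P i = (i < a)%N.
Proof.
move=> h.
pose Pn n := [exists i : 'I_d, (val i == n) && P i].
have PnE : forall i : 'I_d, Pn i = P i.
  move=> i; apply/existsP/idP => [[j /andP[/eqP/val_inj-> //]]|Pi].
  by exists i; rewrite eqxx.
have [a [ad ha]] : exists a, (a <= d)%N /\ forall i, (i < d)%N -> Pn i = (i < a)%N.
  apply: prefix_nat => i j ij jd /existsP[J /andP[/eqP JE PJ]].
  apply/existsP; exists (Ordinal (leq_ltn_trans ij jd)); rewrite eqxx /=.
  by apply: (h _ J) => //=; rewrite JE.
by exists a; split => // i; rewrite -PnE ha.
Qed.

Lemma sum_ind (R : numDomainType) d m (a b : R) : (m <= d)%N ->
  \sum_(i < d) (if (i < m)%N then a else b) = m%:R * a + (d - m)%:R * b.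
Proof.
move=> md.
rewrite -(big_mkord xpredT (fun i => if (i < m)%N then a else b)).
rewrite (@big_cat_nat _ _ _ m 0 d xpredT _ (leq0n m) md).
have -> : \sum_(0 <= i < m | xpredT i) (if (i < m)%N then a else b) = \sum_(0 <= i < m) a.
  by apply: eq_big_nat => i /andP[_ ->].
have -> : \sum_(m <= i < d | xpredT i) (if (i < m)%N then a else b) = \sum_(m <= i < d) b.
  by apply: eq_big_nat => i /andP[h _]; rewrite ltnNge h.
by rewrite !sumr_const_nat subn0 !mulr_natl.
Qed.

Section Core.
Variables (R : rcfType) (d k : nat) (mu : R) (u : 'I_d -> R).
Hypotheses (kd : (1 <= k < d)%N) (mu0 : 0 < mu)
  (us : forall i j : 'I_d, (i <= j)%N -> u j <= u i) (u0 : forall i, 0 <= u i).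

Definition xf (c : R) i := if (1 + mu) * c < u i then u i / (1 + mu) else if c <= u i then c else u i.
Definition gf i (z : R) := if (1 + mu) * z < u i then mu * z else if z <= u i then u i - z else 0.
Definition Gf z := \sum_(i < d) gf i z - k%:R * mu * z.

Let mu1 : 0 < 1 + mu. Proof. by apply: addr_gt0. Qed.
Let pK i : (1 + mu) * (u i / (1 + mu)) = u i.
Proof. by rewrite mulrC mulfVK // gt_eqF. Qed.

Lemma ltpE i z : ((1 + mu) * z < u i) = (z < u i / (1 + mu)).
Proof. by rewrite -{1}(pK i) ltr_pM2l. Qed.
Lemma lepE i z : ((1 + mu) * z <= u i) = (z <= u i / (1 + mu)).
Proof. by rewrite -{1}(pK i) ler_pM2l. Qed.

Lemma p_le_u i : u i / (1 + mu) <= u i.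
Proof. rewrite ler_pdivrMr // mulrDr mulr1 lerDl; exact: mulr_ge0 (u0 i) (ltW mu0). Qed.
Lemma p_ge0 i : 0 <= u i / (1 + mu).
Proof. by rewrite divr_ge0 // ltW. Qed.

Lemma gf1 i z : z <= u i / (1 + mu) -> gf i z = mu * z.
Proof.
move=> h; rewrite /gf ltpE; case: ltP => // h2.
have e : z = u i / (1 + mu) by apply: le_anti; rewrite h h2.
have hz : z <= u i by rewrite e p_le_u.
rewrite hz; have := pK i; rewrite -e; lra.
Qed.

Lemma gf2 i z : u i / (1 + mu) <= z -> z <= u i -> gf i z = u i - z.
Proof. by move=> h1 h2; rewrite /gf ltpE ltNge h1 /= h2. Qed.

Lemma gf3 i z : u i <= z -> gf i z = 0.
Proof.
move=> h; rewrite /gf ltpE ltNge (le_trans (p_le_u i) h) /=.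
case: leP => h2 //; have e : z = u i by apply/le_anti; rewrite h h2.
by rewrite e subrr.
Qed.

Lemma gf_aff i x y : x <= y ->
  ~~ ((x < u i / (1 + mu)) && (u i / (1 + mu) < y)) -> ~~ ((x < u i) && (u i < y)) ->
  affine_on (gf i) x y.
Proof.
move=> xy n1 n2 l /andP[l0 l1].
have zx : x <= x + l * (y - x) by rewrite lerDl mulr_ge0 // subr_ge0.
have zy : x + l * (y - x) <= y.
  have : l * (y - x) <= 1 * (y - x) by apply: ler_wpM2r => //; rewrite subr_ge0.
  lra.
case: (leP y (u i / (1 + mu))) => h1.
  rewrite !gf1 //; [ring | exact: le_trans xy h1 | exact: le_trans zy h1].
have h1' : u i / (1 + mu) <= x by move: n1; rewrite negb_and h1 orbF -leNgt.
case: (leP y (u i)) => h2.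
  rewrite !gf2 //; [ring | exact: le_trans h1' xy| exact: le_trans xy h2 | exact: le_trans h1' zx | exact: le_trans zy h2].
have h2' : u i <= x by move: n2; rewrite negb_and h2 orbF -leNgt.
rewrite !gf3 //; [ring | exact: le_trans h2' xy | exact: le_trans h2' zx].
Qed.


Definition Qs := [seq u i | i <- enum 'I_d] ++ [seq u i / (1 + mu) | i <- enum 'I_d].

Lemma Gf_aff x y : x <= y -> (forall q, q \in Qs -> ~~ ((x < q) && (q < y))) ->
  affine_on Gf x y.
Proof.
move=> xy hq l hl; rewrite /Gf.
have ha : forall i, gf i (x + l * (y - x)) = gf i x + l * (gf i y - gf i x).
  move=> i; apply: gf_aff => //; apply: hq.
  - by rewrite mem_cat [X in _ || X]map_f ?orbT ?mem_enum.
  - by rewrite mem_cat map_f ?mem_enum.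
rewrite (eq_bigr _ (fun i _ => ha i)).
rewrite big_split /= -mulr_sumr sumrB; ring.
Qed.

Lemma xf_cases c i : 0 <= c ->
  [\/ [/\ (1 + mu) * c < u i, c < u i / (1 + mu) & xf c i = u i / (1 + mu)],
      [/\ u i <= (1 + mu) * c, c <= u i & xf c i = c] |
      [/\ u i < c & xf c i = u i]].
Proof.
move=> c0; rewrite /xf; case: ltP => h1; first by apply: Or31; split => //; rewrite -ltpE.
case: ifP => h2; [apply: Or32 | apply: Or33] => //.
by rewrite ltNge h2.
Qed.

Lemma certificate : exists c (w : 'I_d -> R),
  [/\ 0 <= c, (forall i, 0 <= w i <= 1), \sum_(i < d) w i = k%:R,
     (forall i, c ^+ 2 < xf c i ^+ 2 -> w i = 1) /\
     (forall i, xf c i ^+ 2 < c ^+ 2 -> w i = 0) &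
     (forall i, u i = (1 + mu * w i) * xf c i)].
Proof.
have [m [md hm]] : exists m, (m <= d)%N /\ forall i : 'I_d, (0 < u i) = (i < m)%N.
  apply: prefix_ord => i j ij h; exact: lt_le_trans h (us ij).
case: (leqP m k) => mk.
- (* no root needed: c = 0 *)
  have dm : (0 < d - m)%N by rewrite subn_gt0; case/andP: kd => _; exact: leq_ltn_trans mk.
  set r := (k - m)%:R / (d - m)%:R : R.
  have r0 : 0 <= r by rewrite /r divr_ge0.
  have r1 : r <= 1.
    rewrite /r ler_pdivrMr ?ltr0n // mul1r ler_nat; apply: leq_sub2r.
    by case/andP: kd => _ /ltnW.
  exists 0, (fun i => if 0 < u i then 1 else r); split.
  + by [].
  + by move=> i; case: ifP => _; rewrite ?lexx ?ler01 ?r0 ?r1.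
  + rewrite (eq_bigr (fun i : 'I_d => if (i < m)%N then 1 else r)); last by move=> i _; rewrite hm.
    rewrite sum_ind // mulr1 /r mulrC divfK; last by rewrite pnatr_eq0 -lt0n.
    by rewrite -natrD subnKC.
  + split; move=> i.
    case: ifP => // hu; rewrite /xf mulr0 hu.
    have -> : u i = 0 by apply: le_anti; rewrite u0 andbT leNgt hu.
    by rewrite lexx expr0n /= ltxx.
    by rewrite expr0n /= => h; have := sqr_ge0 (xf 0 i); rewrite leNgt h.
  + move=> i; rewrite /xf mulr0; case: ifP => hu.
      by rewrite mulr1 pK.
    have -> : u i = 0 by apply: le_anti; rewrite u0 andbT leNgt hu.
    by rewrite lexx mulr0.
-
  have m0 : (0 < m)%N by case/andP: kd => k1 _; exact: leq_trans k1 (ltnW mk).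
  have m1d : (m.-1 < d)%N by rewrite prednK.
  have d0 : (0 < d)%N by case/andP: kd => k1 kd'; exact: leq_trans k1 (ltnW kd').
  set im := Ordinal m1d; set i0 := Ordinal d0.
  have uim : 0 < u im by rewrite hm /= prednK.
  set a0 := u im / (1 + mu); set b0 := u i0.
  have a0p : 0 < a0 by rewrite divr_gt0.
  have ab : a0 <= b0 by apply: le_trans (p_le_u im) (us _); rewrite /=.
  have Ga : 0 <= Gf a0.
    rewrite /Gf (eq_bigr (fun i : 'I_d => if (i < m)%N then mu * a0 else 0)); last first.
      move=> i _; case: ifP => him.
        apply: gf1; rewrite /a0 ler_pM2r ?invr_gt0 //; apply: us => /=.
        by rewrite -ltnS prednK.
      apply: gf3; have -> : u i = 0 by apply: le_anti; rewrite u0 andbT leNgt hm him.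
      exact: ltW.
    rewrite sum_ind // mulr0 addr0.
    have : (k%:R : R) <= m%:R by rewrite ler_nat ltnW.
    have := mulr_gt0 mu0 a0p; nra.
  have Gb : Gf b0 <= 0.
    rewrite /Gf big1; last by move=> i _; apply: gf3; apply: us.
    rewrite sub0r oppr_le0; apply: mulr_ge0; [apply: mulr_ge0 => //; exact: ltW | exact: u0].
  have [c [/andP[ac cb] Gc]] := pl_ivt (n := size Qs) (Q := Qs) (leqnn _) ab Ga Gb
     (fun x y _ xy _ hq => Gf_aff xy hq).
  have c0 : 0 < c by exact: lt_le_trans a0p ac.
  have mc0 : mu * c != 0 by rewrite mulf_neq0 // gt_eqF.
  exists c, (fun i => gf i c / (mu * c)).
  have hcase : forall i, [\/ [/\ (1 + mu) * c < u i, xf c i = u i / (1 + mu) & gf i c = mu * c],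
      [/\ u i <= (1 + mu) * c, c <= u i, xf c i = c & gf i c = u i - c] |
      [/\ u i < c, xf c i = u i & gf i c = 0]].
    move=> i; case: (xf_cases i (ltW c0)) => [[h1 h2 h3]|[h1 h2 h3]|[h1 h2]].
    + by apply: Or31; rewrite h3 gf1 // ltW.
    + by apply: Or32; rewrite h3 gf2 // ler_pdivrMr // mulrC.
    + by apply: Or33; rewrite h2 gf3 // ltW.
  split.
  + exact: ltW.
  + move=> i; case: (hcase i) => [[_ _ ->]|[h1 h2 _ ->]|[_ _ ->]].
    * by rewrite divff // lexx ler01.
    * apply/andP; split; first by rewrite divr_ge0 ?subr_ge0 // mulr_ge0 // ltW.
      rewrite ler_pdivrMr ?mulr_gt0 // mul1r; lra.
    * by rewrite mul0r lexx ler01.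
  + rewrite -mulr_suml; move/eqP: Gc; rewrite /Gf subr_eq0 => /eqP ->.
    by rewrite -(mulrA _ mu c) mulfK.
  + split => i; case: (hcase i) => [[h1 -> ->]|[h1 h2 -> ->]|[h1 -> ->]].
    * by rewrite divff.
    * by rewrite ltxx.
    * move=> h; exfalso; move: h; apply/negP; rewrite -leNgt.
      have := u0 i; nra.
    * move=> h; exfalso; move: h; apply/negP; rewrite -leNgt.
      have : c < u i / (1 + mu) by rewrite -ltpE.
      have := p_ge0 i; nra.
    * by rewrite ltxx.
    * by rewrite mul0r.
  + move=> i; case: (hcase i) => [[h1 -> ->]|[h1 h2 -> ->]|[h1 -> ->]].
    * by rewrite divff // mulr1 pK.
    * by field; rewrite ?gt_eqF // ; apply/andP; split; rewrite gt_eqF.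
    * by rewrite mul0r mulr0 addr0 mul1r.
Qed.

Lemma coord1S n (h : (n < d)%N) : coord1 u n.+1 = u (Ordinal h).
Proof. by rewrite /coord1 /= insubT. Qed.

Lemma coord1_out n : (d <= n)%N -> coord1 u n.+1 = 0.
Proof. by move=> h; rewrite /coord1 /= insubF // ltnNge h. Qed.

Lemma xf_bounds c i : 0 <= c -> 0 <= xf c i <= u i.
Proof.
move=> c0; case: (xf_cases i c0) => [[_ _ ->]|[_ h ->]|[h ->]].
- by rewrite p_ge0 p_le_u.
- by rewrite c0 h.
- by rewrite u0 lexx.
Qed.

Lemma structure c (w : 'I_d -> R) : 0 <= c -> (forall i, 0 <= w i <= 1) ->
  \sum_(i < d) w i = k%:R ->
  (forall i, c ^+ 2 < xf c i ^+ 2 -> w i = 1) ->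
  (forall i, xf c i ^+ 2 < c ^+ 2 -> w i = 0) ->
  (forall i, u i = (1 + mu * w i) * xf c i) ->
  exists (js je : nat) (xi : R),
       [/\ (1 <= js <= k)%N, (k <= je <= d)%N,
           coord1 u je.+1 <= xi,
           (js == 1)%N || (xi <= coord1 u js.-1 / (1 + mu)) &
           forall i : 'I_d,
             xf c i = if (i.+1 < js)%N then u i / (1 + mu)
                    else if (i.+1 <= je)%N then xi
                    else u i].
Proof.
move=> c0 w01 sw h1 h0 ue.
have [a [ad hA]] : exists a, (a <= d)%N /\ forall i : 'I_d, ((1 + mu) * c < u i) = (i < a)%N.
  apply: prefix_ord => i j ij h; exact: lt_le_trans h (us ij).
have [e [ed hE]] : exists e, (e <= d)%N /\ forall i : 'I_d, (c <= u i) = (i < e)%N.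
  apply: prefix_ord => i j ij h; exact: le_trans h (us ij).
have wA : forall i : 'I_d, (i < a)%N -> w i = 1.
  move=> i ia; apply: h1; case: (xf_cases i c0) => [[_ h ->]|[h _ _]|[h _]].
  - have := p_ge0 i; nra.
  - by move: h; rewrite leNgt hA ia.
  - move: (hA i); rewrite ia mulrDl mul1r => hh; have := mulr_ge0 (ltW mu0) c0; lra.
have wC : forall i : 'I_d, (e <= i)%N -> w i = 0.
  move=> i ei; have ne : (c <= u i) = false by rewrite hE ltnNge ei.
  apply: h0; case: (xf_cases i c0) => [[h _ _]|[_ h _]|[h ->]].
  - suff hc : c <= u i by rewrite hc in ne.
    move: h; rewrite mulrDl mul1r => h; have := mulr_ge0 (ltW mu0) c0; lra.
  - by rewrite h in ne.
  - have := u0 i; nra.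
have ak : (a <= k)%N.
  rewrite -(ler_nat R) -sw -[X in X <= _]mulr1.
  have := @sum_ind R d a 1 0 ad; rewrite mulr0 addr0 => <-.
  apply: ler_sum => i _; case: ifP => h; first by rewrite wA.
  by case/andP: (w01 i).
have ke : (k <= e)%N.
  rewrite -(ler_nat R) -sw -[X in _ <= X]mulr1.
  have := @sum_ind R d e 1 0 ed; rewrite mulr0 addr0 => <-.
  apply: ler_sum => i _; case: ifP => h; first by case/andP: (w01 i).
  by rewrite wC // leqNgt h.
case: (ltnP a k) => ak'.
- exists a.+1, e, c; split.
  + by rewrite ltnS ak'.
  + by rewrite ke ed.
  + case: (ltnP e d) => he; last by rewrite coord1_out.
    by rewrite coord1S; apply/ltW; rewrite ltNge hE /= ltnn.
  + case: a ad hA ak ak' {wA} => [|a] ad hA _ _ //=.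
    by rewrite (coord1S ad); apply: ltW; rewrite -ltpE hA /=.
  + by move=> i; rewrite ltnS -hA -hE.
- have eqa : a = k by apply/eqP; rewrite eqn_leq ak ak'.
  have S : \sum_(i < d) w i = a%:R + \sum_(i < d) (if (i < a)%N then 0 else w i).
    have := @sum_ind R d a 1 0 ad; rewrite mulr0 addr0 mulr1 => <-.
    rewrite -big_split /=; apply: eq_bigr => i _; case: ifP => h.
      by rewrite wA // addr0.
    by rewrite add0r.
  have S0 : \sum_(i < d) (if (i < a)%N then 0 else w i) = 0.
    by apply: (@addrI _ (a%:R)); rewrite -S addr0 sw eqa.
  have wB : forall i : 'I_d, (a <= i)%N -> w i = 0.
    move=> i ai; have := @psumr_eq0P R _ xpredT (fun i : 'I_d => if (i < a)%N then 0 else w i).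
    move=> /(_ _ S0 i isT); rewrite ltnNge ai /=; apply.
    by move=> j _; case: ifP => _ //; case/andP: (w01 j).
  have uB : forall i : 'I_d, (a <= i)%N -> u i <= c /\ xf c i = u i.
    move=> i ai; have hu := ue i; rewrite wB // mulr0 addr0 mul1r in hu.
    case: (xf_cases i c0) => [[h _ _]|[_ _ hx]|[h hx]].
    + by move: h; rewrite hA ltnNge ai.
    + by rewrite hx in hu; rewrite hu hx lexx.
    + by rewrite hx (ltW h).
  have km1 : (k.-1 < d)%N by case/andP: kd => k1 kd'; rewrite prednK // ltnW.
  have k0 : (0 < k)%N by case/andP: kd.
  set ik := Ordinal km1.
  have hik : (1 + mu) * c < u ik by rewrite hA /= eqa prednK // leqnn.
  exists k, k, (u ik / (1 + mu)); split.
  + by case/andP: kd => -> _; rewrite leqnn.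
  + by rewrite leqnn; case/andP: kd => _ /ltnW.
  + have kd' : (k < d)%N by case/andP: kd.
    rewrite (coord1S kd'); apply: (le_trans (proj1 (uB _ _))); first by rewrite /= eqa.
    by apply: ltW; rewrite -ltpE.
  + case: (ltnP 1 k) => k1; last by rewrite eqn_leq k1 k0.
    apply/orP; right.
    have k2 : (k.-2 < d)%N by apply: (leq_ltn_trans _ km1); lia.
    have -> : k.-1 = (k.-2).+1 by lia.
    rewrite (coord1S k2) ler_pM2r ?invr_gt0 //; apply: us => /=.
    lia.
  + move=> i; case: ifP => h.
      by rewrite /xf hA eqa ltnW.
    case: ifP => h'.
      have -> : i = ik by apply: val_inj => /=; move: h h'; rewrite /=; lia.
      by rewrite /xf hik.
    by apply: (proj2 (uB _ _)); rewrite eqa leqNgt h'.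
Qed.
End Core.

Section Final.
Context {R : rcfType}.

Lemma sqsum_le0 d (f : 'I_d -> R) : \sum_(i < d) f i ^+ 2 <= 0 -> forall i, f i = 0.
Proof.
move=> h i.
have h0 : \sum_(i < d) f i ^+ 2 = 0 by apply: le_anti; rewrite h sumr_ge0 // => j _; apply: sqr_ge0.
have := @psumr_eq0P R _ xpredT (fun i => f i ^+ 2) (fun j _ => sqr_ge0 (f j)) h0 i isT.
by move/eqP; rewrite sqrf_eq0 => /eqP.
Qed.

Lemma core_min d k (mu : R) (u : 'I_d -> R) :
  (1 <= k < d)%N -> 0 < mu ->
  (forall i j : 'I_d, (i <= j)%N -> u j <= u i) -> (forall i, 0 <= u i) ->
  exists x : 'I_d -> R,
    [/\ (forall y, obj k mu u x + \sum_(i < d) (y i - x i) ^+ 2 <= obj k mu u y),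
        (forall i, 0 <= x i <= u i) &
        exists (js je : nat) (xi : R),
       [/\ (1 <= js <= k)%N, (k <= je <= d)%N,
           coord1 u je.+1 <= xi,
           (js == 1)%N || (xi <= coord1 u js.-1 / (1 + mu)) &
           forall i : 'I_d,
             x i = if (i.+1 < js)%N then u i / (1 + mu)
                    else if (i.+1 <= je)%N then xi
                    else u i]].
Proof.
move=> kd mu0 us u0.
have [c [w [c0 w01 sw [h1 h0] ue]]] := certificate kd mu0 us u0.
exists (xf mu u c); split.
- by apply: (cert_ineq (tau := c ^+ 2)) => //; case/andP: kd.
- by move=> i; apply: xf_bounds.
- exact: (structure kd mu0 us u0 c0 w01 sw h1 h0 ue).
Qed.

Lemma argmin_eq d k (mu : R) (u x xt : 'I_d -> R) :
  (forall y, obj k mu u x + \sum_(i < d) (y i - x i) ^+ 2 <= obj k mu u y) ->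
  is_argmin (obj k mu u) xt -> forall i, xt i = x i.
Proof.
move=> hx hxt i; apply/eqP; rewrite -subr_eq0; apply/eqP.
apply: (sqsum_le0 (f := fun i => xt i - x i)).
have := hx xt; have := hxt x; lra.
Qed.

Lemma sum_perm d (s : {perm 'I_d}) (F : 'I_d -> R) :
  \sum_(i < d) F (s i) = \sum_(i < d) F i.
Proof. by rewrite [RHS](reindex_inj (@perm_inj _ s)). Qed.

Lemma topk_permabs d k (s : {perm 'I_d}) (z z' : 'I_d -> R) :
  (forall i, `|z' i| = `|z (s i)|) -> topk_norm k z' = topk_norm k z.
Proof.
move=> h; apply: T_perm.
have -> : [seq `|z' i| | i <- enum 'I_d] = [seq `|z i| | i <- map s (enum 'I_d)].
  by elim: (enum _) => //= a l ->; rewrite h.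
apply: perm_map; apply: uniq_perm.
- by rewrite map_inj_uniq ?enum_uniq //; exact: perm_inj.
- exact: enum_uniq.
- move=> i; rewrite mem_enum; apply/mapP; exists ((s^-1)%g i); by rewrite ?mem_enum ?permKV.
Qed.

Lemma prox2 d k (mu : R) (v y : 'I_d -> R) :
  2 * prox_obj k mu v y = mu * topk_norm k y ^+ 2 + \sum_(i < d) (v i - y i) ^+ 2.
Proof. by rewrite /prox_obj norm2_sq; field. Qed.

Lemma objE d k (mu : R) (u x : 'I_d -> R) :
  obj k mu u x = mu * topk_norm k x ^+ 2 + \sum_(i < d) (x i - u i) ^+ 2.
Proof. by rewrite /obj norm2_sq. Qed.

Lemma sg_sq (v x : R) : (v - (if 0 <= v then 1 else -1) * x) ^+ 2 = (`|v| - x) ^+ 2.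
Proof.
case: ifP => h; first by rewrite ger0_norm // mul1r.
by rewrite ltr0_norm ?ltNge ?h //; ring.
Qed.

Lemma abs_ineq (v y : R) : (`|v| - `|y|) ^+ 2 <= (v - y) ^+ 2.
Proof.
have h : v * y <= `|v| * `|y| by rewrite -normrM ler_norm.
have e1 : `|v| ^+ 2 = v ^+ 2 by rewrite real_normK // num_real.
have e2 : `|y| ^+ 2 = y ^+ 2 by rewrite real_normK // num_real.
have -> : (`|v| - `|y|) ^+ 2 = `|v| ^+ 2 + `|y| ^+ 2 - 2 * (`|v| * `|y|) by ring.
have -> : (v - y) ^+ 2 = v ^+ 2 + y ^+ 2 - 2 * (v * y) by ring.
rewrite e1 e2; lra.
Qed.

Lemma recover (v y : R) : (v - y) ^+ 2 = (`|v| - `|y|) ^+ 2 -> (v = 0 -> y = 0) ->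
  y = (if 0 <= v then 1 else -1) * `|y|.
Proof.
move=> h hz; case: (ltrgtP 0 v) => hv.
- rewrite mul1r; case: (lerP 0 y) => hy; first by rewrite ger0_norm.
  move: h; rewrite (gtr0_norm hv) (ltr0_norm hy) => h; nra.
- rewrite mulN1r; case: (lerP 0 y) => hy.
  + move: h; rewrite (ltr0_norm hv) (ger0_norm hy) => h.
    have : y = 0 by nra.
    by move=> e; rewrite e oppr0.
  + by rewrite ltr0_norm // opprK.
- by rewrite (hz (esym hv)) normr0 mulr0.
Qed.
End Final.
Unset Implicit Arguments. Set Strict Implicit. Set Printing Implicit Defensive.
Theorem mainTheorem7 (R : rcfType) (d k : nat) (mu : R) :
  (1 <= k < d)%N -> 0 < mu ->
  (* Part 1: structure of the minimizer for sorted nonnegative u *)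
  (forall u : 'I_d -> R,
     (forall i j : 'I_d, (i <= j)%N -> u j <= u i) ->
     (forall i : 'I_d, 0 <= u i) ->
     forall xt : 'I_d -> R, is_argmin (obj k mu u) xt ->
     exists (js je : nat) (xi : R),
       [/\ (1 <= js <= k)%N, (k <= je <= d)%N,
           coord1 u je.+1 <= xi,
           (js == 1)%N || (xi <= coord1 u js.-1 / (1 + mu)) &
           forall i : 'I_d,
             xt i = if (i.+1 < js)%N then u i / (1 + mu)
                    else if (i.+1 <= je)%N then xi
                    else u i])
  /\
  (* Part 2: the prox formula *)
  (forall (v : 'I_d -> R) (s : {perm 'I_d}),
     (forall i j : 'I_d, (i <= j)%N -> `|v (s j)| <= `|v (s i)|) ->
     forall xt : 'I_d -> R,
       is_argmin (obj k mu (permv s (fun i => `|v i|))) xt ->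
       let p := fun i => sgnv v i * permv s^-1 xt i in
       is_argmin (prox_obj k mu v) p /\
       (forall y, is_argmin (prox_obj k mu v) y -> y = p)).
Proof.
move=> kd mu0; split.
  move=> u us u0 xt hxt.
  have [x [hx xb [js [je [xi [H1 H2 H3 H4 H5]]]]]] := core_min kd mu0 us u0.
  exists js, je, xi; split => // i; rewrite (argmin_eq hx hxt i); exact: H5.
move=> v s hs xt hxt p.
set u := permv s (fun i => `|v i|).
have us : forall i j : 'I_d, (i <= j)%N -> u j <= u i by exact: hs.
have u0 : forall i, 0 <= u i by move=> i; rewrite /u /permv normr_ge0.
have [x [hx xb _]] := core_min kd mu0 us u0.
have xtE : xt = x by apply: functional_extensionality; exact: argmin_eq hx hxt.
pose y' (y : 'I_d -> R) := fun j => `|y (s j)|.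
have E1 : 2 * prox_obj k mu v p = obj k mu u xt.
  rewrite prox2 objE.
  rewrite (@topk_permabs _ _ k (s^-1)%g xt p); last first.
    by move=> i; rewrite /p /permv /sgnv normrM; case: ifP => _; rewrite ?normrN normr1 mul1r.
  congr (_ + _).
  rewrite -(sum_perm s (fun i => (v i - p i) ^+ 2)).
  apply: eq_bigr => i _; rewrite /p /permv permK /sgnv sg_sq /u /permv; ring.
have E2 : forall y, 2 * prox_obj k mu v y = obj k mu u (y' y) +
    \sum_(i < d) ((v i - y i) ^+ 2 - (`|v i| - `|y i|) ^+ 2).
  move=> y; rewrite prox2 objE.
  rewrite (@topk_permabs _ _ k s y (y' y)); last by move=> i; rewrite /y' normr_id.
  rewrite sumrB -(sum_perm s (fun i => (`|v i| - `|y i|) ^+ 2)).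
  have -> : \sum_(i < d) (y' y i - u i) ^+ 2 = \sum_(i < d) (`|v (s i)| - `|y (s i)|) ^+ 2.
    by apply: eq_bigr => i _; rewrite /y' /u /permv; ring.
  ring.
have D0 : forall y, 0 <= \sum_(i < d) ((v i - y i) ^+ 2 - (`|v i| - `|y i|) ^+ 2).
  by move=> y; apply: sumr_ge0 => i _; rewrite subr_ge0 abs_ineq.
split.
  move=> y; have := E2 y; have := D0 y; have := hxt (y' y); rewrite -E1; lra.
move=> y hy; apply: functional_extensionality => i.
have h1 := hy p; have h2 := E2 y; have h3 := D0 y; have h4 := hx (y' y).
have h5 : obj k mu u xt = obj k mu u x by rewrite xtE.
have Dsq0 : 0 <= \sum_(j < d) (y' y j - x j) ^+ 2.
  by apply: sumr_ge0 => j _; apply: sqr_ge0.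
have Dsq : \sum_(j < d) (y' y j - x j) ^+ 2 <= 0 by lra.
have Dd : \sum_(i < d) ((v i - y i) ^+ 2 - (`|v i| - `|y i|) ^+ 2) = 0 by lra.
have yx := sqsum_le0 Dsq.
have dpos : forall j : 'I_d, xpredT j -> 0 <= (v j - y j) ^+ 2 - (`|v j| - `|y j|) ^+ 2.
  by move=> j _; rewrite subr_ge0 abs_ineq.
have di := @psumr_eq0P R _ xpredT _ dpos Dd i isT.
move/eqP: di; rewrite subr_eq0 => /eqP di.
set j := (s^-1)%g i.
have yj : `|y i| = x j.
  by move: (yx j) => /= /eqP; rewrite subr_eq0 /y' /j permKV => /eqP.
rewrite /p /permv xtE -/j -yj.
apply: recover => // v0.
have := xb j; rewrite -yj /u /permv /j permKV v0 normr0 => /andP[_ h].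
by apply/eqP; rewrite -normr_le0.
Qed.
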